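(* Let $H\ge1$, $c_a\ge0$, $c_R>0$, $\beta=c_a/c_R$. Consider two patients $j\in\{u,l\}$ with readmission probabilities $p^j_{h,0},p^j_{h,1}\in[0,1)$, $p^j_{h,0}\ge p^j_{h,1}$, $h=1,\dots,H$, and treatment effects $\Delta^j_h=p^j_{h,0}-p^j_{h,1}$. For each patient define $V^j_{H+1}=0$, $V^j_h=\min\{c_a+p^j_{h,1}c_R+(1-p^j_{h,1})V^j_{h+1},\ p^j_{h,0}c_R+(1-p^j_{h,0})V^j_{h+1}\}$, and the optimal action $a^{*,j}_h=1$ if $\Delta^j_h>\beta/(1-V^j_{h+1}/c_R)$ and $a^{*,j}_h=0$ otherwise. Suppose that for all $1\le h\le H$, $$\Delta^l_h-\Delta^u_h<\frac{\beta}{\prod_{i=h+1}^H(1-p^l_{i,1})}-\frac{\beta}{\prod_{i=h+1}^H(1-p^u_{i,0})}.$$ Then for every $1\le h\le H$, $a^{*,l}_h=1$ implies $a^{*,u}_h=1$.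
   Context: Empty products equal $1$. The action rule $a^{*,j}_h=1$ iff $\Delta^j_h>\beta/(1-V^j_{h+1}/c_R)$ is the optimal (cost-minimizing, ties broken toward no intervention) decision in the post-discharge MDP with intervention cost $c_a$ and readmission cost $c_R$. *)

(* Defs.v *)
From mathcomp Require Import all_boot all_order all_algebra.
Set Implicit Arguments. Unset Strict Implicit. Unset Printing Implicit Defensive.
Import Order.TTheory GRing.Theory Num.Theory.
Local Open Scope ring_scope.

Section Readmission.
Variables (R : realFieldType) (H : nat) (ca cR : R) (p0 p1 : nat -> R).

(* Vaux k = V_{H+1-k}; the period handled at step k'.+1 is h = H - k'. *)
Fixpoint Vaux (k : nat) : R :=
  match k with
  | 0 => 0
  | k'.+1 =>
      let h := (H - k')%N in
      Num.min (ca + p1 h * cR + (1 - p1 h) * Vaux k')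
              (p0 h * cR + (1 - p0 h) * Vaux k')
  end.

Definition Vfun (h : nat) : R := Vaux (H.+1 - h).

Definition Delta (h : nat) : R := p0 h - p1 h.

Definition opt_action (h : nat) : bool :=
  (ca / cR) / (1 - Vfun h.+1 / cR) < Delta h.

End Readmission.

(* Main.v *)
Require Import Defs.
From mathcomp Require Import all_boot all_order all_algebra.
From mathcomp Require Import ring lra zify.
Import Order.TTheory GRing.Theory Num.Theory.
Local Open Scope ring_scope.

Lemma step (R : realFieldType) (ca cR p0 p1 v P0 P1 : R) :
  0 <= ca -> 0 < cR -> 0 <= p1 -> p1 <= p0 -> p0 < 1 -> 0 < P0 ->
  P0 <= 1 - v / cR -> 1 - v / cR <= P1 ->
  [/\ 0 < (1 - p0) * P0,
      (1 - p0) * P0 <= 1 - Num.min (ca + p1 * cR + (1 - p1) * v) (p0 * cR + (1 - p0) * v) / cR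
    & 1 - Num.min (ca + p1 * cR + (1 - p1) * v) (p0 * cR + (1 - p0) * v) / cR <= (1 - p1) * P1].
Proof.
move=> ca0 cR0 h1 h2 h3 P00 L U.
set v' := Num.min _ _.
have Hv1 : v' <= p0 * cR + (1 - p0) * v by rewrite /v' ge_min lexx orbT.
have vc : v <= cR.
  have : 0 <= 1 - v / cR by apply: le_trans L; exact: ltW.
  by rewrite subr_ge0 ler_pdivrMr // mul1r.
have Hv2 : p1 * cR + (1 - p1) * v <= v'.
  rewrite /v' le_min; apply/andP; split.
    by rewrite -addrA lerDr.
  rewrite -subr_ge0.
  have -> : p0 * cR + (1 - p0) * v - (p1 * cR + (1 - p1) * v) = (p0 - p1) * (cR - v) by ring.
  by apply: mulr_ge0; rewrite subr_ge0.
set y := v / cR in L U.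
have ev : v = y * cR by rewrite /y mulfVK // gt_eqF.
set y' := v' / cR.
have ev' : v' = y' * cR by rewrite /y' mulfVK // gt_eqF.
rewrite ev ev' in Hv1 Hv2.
have A1 : y' <= p0 + (1 - p0) * y.
  rewrite -(ler_pM2r cR0); have -> : (p0 + (1-p0)*y)*cR = p0*cR + (1-p0)*(y*cR) by ring. exact: Hv1.
have A2 : p1 + (1 - p1) * y <= y'.
  rewrite -(ler_pM2r cR0); have -> : (p1 + (1-p1)*y)*cR = p1*cR + (1-p1)*(y*cR) by ring. exact: Hv2.
split.
- by apply: mulr_gt0 => //; rewrite subr_gt0.
- apply: le_trans (_ : (1 - p0) * (1 - y) <= _).
    by apply: ler_wpM2l => //; rewrite subr_ge0 ltW.
  rewrite -subr_ge0.
  have -> : 1 - y' - (1 - p0) * (1 - y) = (p0 + (1 - p0) * y) - y' by ring.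
  by rewrite subr_ge0.
- apply: le_trans (_ : (1 - p1) * (1 - y) <= _).
    rewrite -subr_ge0.
    have -> : (1 - p1) * (1 - y) - (1 - y') = y' - (p1 + (1 - p1) * y) by ring.
    by rewrite subr_ge0.
  by apply: ler_wpM2l => //; rewrite subr_ge0 (le_trans h2) // ltW.
Qed.

Lemma lin (R : realFieldType) (Dl Du bPl bPu ba bb : R) :
  Dl - Du < bPl - bPu -> ba < Dl -> bb <= bPu -> bPl <= ba -> bb < Du.
Proof. move=> *; lra. Qed.

Lemma natfacts (H k : nat) : (k.+1 <= H)%N ->
  [/\ (1 <= H - k <= H)%N, (H.+1 - k.+1 = H - k)%N, ((H - k).+1 = H.+1 - k)%N
   & (H - k < H.+1)%N].
Proof. move=> hk; split; lia. Qed.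

Lemma natfacts2 (H h : nat) : (1 <= h <= H)%N ->
  (H - h <= H)%N /\ (H.+1 - (H - h) = h.+1)%N.
Proof. move=> hh; split; lia. Qed.

Lemma Vbounds (R : realFieldType) (H : nat) (ca cR : R) (p0 p1 : nat -> R) :
  0 <= ca -> 0 < cR ->
  (forall h : nat, (1 <= h <= H)%N ->
     [/\ 0 <= p1 h, p1 h <= p0 h & p0 h < 1]) ->
  forall k, (k <= H)%N ->
  [/\ 0 < \prod_((H.+1 - k)%N <= i < H.+1) (1 - p0 i),
      \prod_((H.+1 - k)%N <= i < H.+1) (1 - p0 i) <= 1 - Vaux H ca cR p0 p1 k / cR
    & 1 - Vaux H ca cR p0 p1 k / cR <= \prod_((H.+1 - k)%N <= i < H.+1) (1 - p1 i)].
Proof.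
move=> ca0 cR0 hp; elim=> [|k IH] hk.
  by rewrite subn0 !big_geq // mul0r subr0 ltr01 lexx.
have [P0 L U] := IH (ltnW hk).
have [n1 e e2 n4] := @natfacts H k hk.
have [h1 h2 h3] := hp _ n1.
rewrite e (big_ltn n4) (big_ltn n4) e2.
rewrite [Vaux _ _ _ _ _ k.+1]/=.
exact: (@step R ca cR (p0 (H-k)%N) (p1 (H-k)%N) _ _ _ ca0 cR0 h1 h2 h3 P0 L U).
Qed.
Theorem mainTheorem5 (R : realFieldType) (H : nat) (ca cR : R)
    (p0u p1u p0l p1l : nat -> R) :
  (1 <= H)%N -> 0 <= ca -> 0 < cR ->
  (forall h : nat, (1 <= h <= H)%N ->
     [/\ 0 <= p1u h, p1u h <= p0u h & p0u h < 1]) ->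
  (forall h : nat, (1 <= h <= H)%N ->
     [/\ 0 <= p1l h, p1l h <= p0l h & p0l h < 1]) ->
  (forall h : nat, (1 <= h <= H)%N ->
     Delta p0l p1l h - Delta p0u p1u h <
       (ca / cR) / (\prod_(h.+1 <= i < H.+1) (1 - p1l i))
       - (ca / cR) / (\prod_(h.+1 <= i < H.+1) (1 - p0u i))) ->
  forall h : nat, (1 <= h <= H)%N ->
    opt_action H ca cR p0l p1l h -> opt_action H ca cR p0u p1u h.
Proof.
move=> H1 ca0 cR0 hu hl hyp h hh.
have [hk e] := @natfacts2 H h hh.
have [P0u Lu Uu] := @Vbounds R H ca cR p0u p1u ca0 cR0 hu _ hk.
have [P0l Ll Ul] := @Vbounds R H ca cR p0l p1l ca0 cR0 hl _ hk.
rewrite e in P0u Lu Uu P0l Ll Ul.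
rewrite /opt_action /Vfun subSS.
set a := 1 - _ / cR in Ll Ul *.
set b := 1 - _ / cR in Lu Uu *.
set Pl := \prod_(_ <= i < _) (1 - p1l i) in Ul *.
set Pu := \prod_(_ <= i < _) (1 - p0u i) in P0u Lu *.
set beta := ca / cR.
have b0 : 0 <= beta by apply: divr_ge0 => //; exact: ltW.
have a0 : 0 < a by apply: lt_le_trans Ll.
have I1 : beta / b <= beta / Pu.
  apply: ler_wpM2l => //; rewrite lef_pV2 ?posrE //; exact: lt_le_trans Lu.
have I2 : beta / Pl <= beta / a.
  apply: ler_wpM2l => //; rewrite lef_pV2 ?posrE //; exact: lt_le_trans Ul.
move=> H0; exact: (@lin R _ _ _ _ _ _ (hyp h hh) H0 I1 I2).
Qed.
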